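(* If $X$ is a metric space with $\operatorname{trasdim}X<\infty$, then $\operatorname{trasdim}X<\omega_1$, where $\omega_1$ is the first uncountable ordinal.
   Context: A family $\mathcal A$ of subsets of a metric space is uniformly bounded if there is $C>0$ with $\operatorname{diam}A\le C$ for all $A\in\mathcal A$; it is $r$-disjoint if $d(A_1,A_2)\ge r$ for all distinct $A_1,A_2\in\mathcal A$. For a set $L$, $\mathrm{Fin}\,L$ is the collection of finite nonempty subsets of $L$. For $M\subset \mathrm{Fin}\,L$ and $\sigma\in\{\emptyset\}\cup\mathrm{Fin}\,L$, $M^\sigma=\{\tau\in\mathrm{Fin}\,L:\sigma\cup\tau\in M,\ \sigma\cap\tau=\emptyset\}$, and $M^a=M^{\{a\}}$. The ordinal $\operatorname{Ord}M$: $\operatorname{Ord}M=0$ iff $M=\emptyset$; $\operatorname{Ord}M\le\alpha$ iff $\operatorname{Ord}M^a<\alpha$ for every $a\in L$; $\operatorname{Ord}M=\alpha$ iff $\operatorname{Ord}M\le\alpha$ and not $\operatorname{Ord}M<\alpha$; $\operatorname{Ord}M=\infty$ iff $\operatorname{Ord} M\le\alpha$ for no ordinal $\alpha$ ($\infty$ is larger than every ordinal). For a metric space $(X,d)$, $A(X,d)$ is the set of $\sigma\in\mathrm{Fin}\,\mathbb N$ such that there do NOT exist uniformly bounded families $\mathcal V_i$, $i\in\sigma$, with $\bigcup_{i\in\sigma}\mathcal V_i$ covering $X$ and each $\mathcal V_i$ being $i$-disjoint. Define $\operatorname{trasdim}X=\operatorname{Ord}A(X,d)$, except $\operatorname{trasdim}X=-1$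 iff $X$ is bounded. *)

(* Defs.v *)
From Stdlib Require Import Reals.
From mathcomp Require Import all_boot finmap.
Set Implicit Arguments. Unset Strict Implicit. Unset Printing Implicit Defensive.
Local Open Scope fset_scope.

Definition is_metric (X : Type) (d : X -> X -> R) : Prop :=
  (forall x y, Rle 0 (d x y)) /\
  (forall x y, d x y = R0 <-> x = y) /\
  (forall x y, d x y = d y x) /\
  (forall x y z, Rle (d x z) (Rplus (d x y) (d y z))).

Definition bounded_space (X : Type) (d : X -> X -> R) : Prop :=
  exists C : R, forall x y, Rle (d x y) C.

Definition family (X : Type) := (X -> Prop) -> Prop.

(* diam A <= C  iff all pairwise distances in A are <= C *)
Definition uniformly_bounded (X : Type) (d : X -> X -> R) (V : family X) : Prop :=
  exists C : R, Rlt R0 C /\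
    forall A, V A -> forall x y, A x -> A y -> Rle (d x y) C.

(* d(A1,A2) = inf of distances >= r, for distinct members A1, A2 *)
Definition r_disjoint (X : Type) (d : X -> X -> R) (r : R) (V : family X) : Prop :=
  forall A1 A2, V A1 -> V A2 -> ~ (forall x, A1 x <-> A2 x) ->
    forall x y, A1 x -> A2 y -> Rle r (d x y).

Definition FinFam := {fset nat} -> Prop.

Definition Msec (M : FinFam) (sigma : {fset nat}) : FinFam :=
  fun tau => tau != fset0 /\ M (sigma `|` tau) /\ [disjoint sigma & tau].

(** An ordinal is represented by an element of a well-ordered type. *)
Record wellorder : Type := WellOrder {
  wo_T :> Type;
  wo_lt : wo_T -> wo_T -> Prop;
  wo_irrefl : forall x, ~ wo_lt x x;
  wo_trans : forall x y z, wo_lt x y -> wo_lt y z -> wo_lt x z;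
  wo_total : forall x y, wo_lt x y \/ x = y \/ wo_lt y x;
  wo_wf : well_founded wo_lt
}.

(* OrdLe M x  <->  Ord M <= x  (where x is an ordinal, given as an element
   of a well-order): Ord M <= x iff M = empty, or for every a, Ord M^a < x,
   i.e. Ord M^a <= y for some y < x. *)
Inductive OrdLe (W : wellorder) (M : FinFam) (x : W) : Prop :=
| OrdLe_empty : (forall s, ~ M s) -> OrdLe M x
| OrdLe_step : (forall a : nat, exists y : W, wo_lt y x /\ OrdLe (Msec M [fset a]) y) ->
               OrdLe M x.

Definition Afam (X : Type) (d : X -> X -> R) : FinFam :=
  fun sigma => sigma != fset0 /\
    ~ (exists V : nat -> family X,
         (forall i, i \in sigma -> uniformly_bounded d (V i) /\ r_disjoint d (INR i) (V i)) /\
         (forall x, exists i, i \in sigma /\ exists A, V i A /\ A x)).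

(* trasdim X < oo : X bounded (trasdim = -1) or Ord A(X,d) <= alpha for some ordinal alpha *)
Definition trasdim_lt_infty (X : Type) (d : X -> X -> R) : Prop :=
  bounded_space d \/ exists (W : wellorder) (x : W), OrdLe (Afam d) x.

(* trasdim X < omega_1 : X bounded or Ord A(X,d) <= alpha for a countable ordinal alpha *)
Definition trasdim_lt_omega1 (X : Type) (d : X -> X -> R) : Prop :=
  bounded_space d \/
  exists (W : wellorder) (x : W),
    (exists f : W -> nat, forall u v, f u = f v -> u = v) /\ OrdLe (Afam d) x.

(* Main.v *)
Require Import Defs.
From Stdlib Require Import Reals.
From mathcomp Require Import all_boot finmap.
From Stdlib Require Import ClassicalEpsilon ProofIrrelevance Inverse_Image.
Local Open Scope fset_scope.

Section Sub.
Variable W : wellorder.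
Variable M0 : FinFam.
Variable x0 : W.

Definition ch (M : FinFam) (x : W) (a : nat) : W :=
  epsilon (inhabits x0) (fun y => wo_lt y x /\ OrdLe (Msec M [fset a]) y).

Fixpoint path (M : FinFam) (x : W) (s : seq nat) : FinFam * W :=
  match s with
  | [::] => (M, x)
  | a :: s' => path (Msec M [fset a]) (ch M x a) s'
  end.

Lemma path_rcons M x s a :
  path M x (rcons s a) =
  (Msec (path M x s).1 [fset a], ch (path M x s).1 (path M x s).2 a).
Proof. elim: s M x => [|b s IH] M x //=. Qed.

Definition SP (w : W) : Prop := exists s, (path M0 x0 s).2 = w.
Definition ST := {w : W | SP w}.
Definition slt (u v : ST) : Prop := wo_lt (proj1_sig u) (proj1_sig v).

Lemma ST_eq (u v : ST) : proj1_sig u = proj1_sig v -> u = v.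
Proof.
  case: u => [u pu]; case: v => [v pv] /= E; subst v.
  by rewrite (proof_irrelevance _ pu pv).
Qed.

Lemma slt_irrefl x : ~ slt x x.
Proof. exact: wo_irrefl. Qed.
Lemma slt_trans x y z : slt x y -> slt y z -> slt x z.
Proof. exact: wo_trans. Qed.
Lemma slt_total x y : slt x y \/ x = y \/ slt y x.
Proof.
  case: (wo_total (proj1_sig x) (proj1_sig y)) => [h|[h|h]]; auto.
  by right; left; apply: ST_eq.
Qed.
Lemma slt_wf : well_founded slt.
Proof. apply: (Stdlib.Wellfounded.Inverse_Image.wf_inverse_image _ _ _ (fun u : ST => proj1_sig u)); exact: wo_wf. Qed.

Definition SW : wellorder := WellOrder slt_irrefl slt_trans slt_total slt_wf.

Definition sf (u : SW) : nat :=
  @choice.pickle (seq nat) (proj1_sig (constructive_indefinite_description _ (proj2_sig u))).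

Lemma sf_inj u v : sf u = sf v -> u = v.
Proof.
  rewrite /sf.
  case: (constructive_indefinite_description _ (proj2_sig u)) => s Hs.
  case: (constructive_indefinite_description _ (proj2_sig v)) => t Ht /=.
  move/(pcan_inj (@choice.pickleK (seq nat))) => E; subst t.
  apply: ST_eq; by rewrite -Hs -Ht.
Qed.

Lemma main : forall (x : W) (M : FinFam) (s : seq nat) (H : (path M0 x0 s).2 = x),
  (path M0 x0 s).1 = M -> OrdLe M x ->
  OrdLe (W := SW) M (exist SP x (ex_intro _ s H)).
Proof.
  elim/(well_founded_ind (@wo_wf W)) => x IH M s H H1 HO.
  case: HO => [He | Hs]; first by apply: OrdLe_empty.
  apply: OrdLe_step => a.
  have Hc : wo_lt (ch M x a) x /\ OrdLe (Msec M [fset a]) (ch M x a).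
    exact: (epsilon_spec (inhabits x0) (fun y => wo_lt y x /\ OrdLe (Msec M [fset a]) y) (Hs a)).
  have H' : (path M0 x0 (rcons s a)).2 = ch M x a.
    by rewrite path_rcons /= H H1.
  exists (exist SP (ch M x a) (ex_intro _ (rcons s a) H')); split.
    exact: Hc.1.
  apply: IH; [exact: Hc.1| |exact: Hc.2].
  by rewrite path_rcons /= H1.
Qed.

End Sub.

Theorem theorem4 (X : Type) (d : X -> X -> R) (Hd : is_metric d) :
  trasdim_lt_infty d -> trasdim_lt_omega1 d.
Proof.
  case=> [Hb|[W [x HO]]]; first by left.
  right.
  have H : (@path W x (Afam d) x [::]).2 = x by [].
  exists (@SW W (Afam d) x), (exist (@SP W (Afam d) x) x (ex_intro _ [::] H)).
  split; first by exists (@sf W (Afam d) x); apply: sf_inj.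
  by apply: main.
Qed.
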